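(* Let $f,g:[0,\infty)\to[0,\infty)$, let $0<a<b<\infty$, and suppose $fg$ is Lebesgue integrable on $[a,b]$. Let $q>1$ and suppose $f^q$ and $g^{q/(q-1)}$ are both $(1,1)$-GA-convex on $[0,b]$. Then \[ \int_a^b f(x)g(x)\,dx\le\Bigl\{f^q(a)[L(a,b)-a]+[b-L(a,b)]f^q(b)\Bigr\}^{1/q}\Bigl\{g^{q/(q-1)}(a)[L(a,b)-a]+[b-L(a,b)]g^{q/(q-1)}(b)\Bigr\}^{1-1/q}. \]
   Context: For $c>0$, $h:[0,c]\to\mathbb{R}$ and $(\alpha,m)\in(0,1]^2$, $h$ is called $(\alpha,m)$-GA-convex on $[0,c]$ if $h\bigl(x^\lambda y^{m(1-\lambda)}\bigr)\le\lambda^\alpha h(x)+m(1-\lambda^\alpha)h(y)$ for all $x,y\in[0,c]$ and all $\lambda\in[0,1]$ (with the convention $0^0=1$). For $x,y>0$, $x\neq y$, the logarithmic mean is $L(x,y)=\frac{y-x}{\ln y-\ln x}$. *)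

(* Defs.v *)
From Stdlib Require Import Reals Lra.
Open Scope R_scope.

(* Real power x^y for x >= 0, with 0^0 = 1 and 0^y = 0 for y <> 0
   (Stdlib's Rpower 0 y = 1 for all y, which is not the intended convention). *)
Definition rpow (x y : R) : R :=
  if Req_EM_T x 0 then (if Req_EM_T y 0 then 1 else 0) else Rpower x y.

Definition GA_convex (alpha m c : R) (h : R -> R) : Prop :=
  forall x y lam : R,
    0 <= x <= c -> 0 <= y <= c -> 0 <= lam <= 1 ->
    h (rpow x lam * rpow y (m * (1 - lam)))
      <= rpow lam alpha * h x + m * (1 - rpow lam alpha) * h y.

Definition logmean (x y : R) : R := (y - x) / (ln y - ln x).

(* Main.v *)
Require Import Defs.
From Stdlib Require Import Reals Lra.
From Coquelicot Require Import Coquelicot.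
Open Scope R_scope.

Lemma exp_le_mono x y : x <= y -> exp x <= exp y.
Proof. intros [H|H]; [left; apply exp_increasing; auto | subst; lra]. Qed.

Lemma rpow_ge0 x y : 0 <= rpow x y.
Proof.
  unfold rpow; destruct (Req_EM_T x 0); [destruct (Req_EM_T y 0); lra|].
  unfold Rpower; left; apply exp_pos.
Qed.

Lemma rpow_0l y : y <> 0 -> rpow 0 y = 0.
Proof. intros; unfold rpow; destruct (Req_EM_T 0 0); [|lra]; destruct (Req_EM_T y 0); lra. Qed.

Lemma rpow_pos x y : 0 < x -> rpow x y = Rpower x y.
Proof. intros; unfold rpow; destruct (Req_EM_T x 0); [lra|auto]. Qed.

Lemma rpow_1 t : 0 <= t -> rpow t 1 = t.
Proof.
  intros [H|H]. rewrite rpow_pos; auto; apply Rpower_1; auto.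
  subst; apply rpow_0l; lra.
Qed.

Lemma rpow_inv y r s : 0 <= y -> r <> 0 -> r * s = 1 -> rpow (rpow y r) s = y.
Proof.
  intros [H|H] Hr Hrs.
  - rewrite (rpow_pos y) by auto. rewrite rpow_pos by (unfold Rpower; apply exp_pos).
    rewrite Rpower_mult, Hrs. apply Rpower_1; auto.
  - subst. rewrite rpow_0l by auto. apply rpow_0l. intro; subst; lra.
Qed.

Lemma rpow_zero_inv x y : 0 <= x -> y <> 0 -> rpow x y <= 0 -> x = 0.
Proof.
  intros [H|H] Hy Hr; auto. rewrite rpow_pos in Hr by auto.
  unfold Rpower in Hr. pose proof (exp_pos (y * ln x)); lra.
Qed.

Lemma ln_le_m1 z : 0 < z -> ln z <= z - 1.
Proof. intros. pose proof (exp_ineq1_le (ln z)). rewrite exp_ln in H0; lra. Qed.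

Lemma amgm th X Y U V : 0 < th < 1 -> 0 <= X -> 0 <= Y -> 0 < U -> 0 < V ->
  rpow X th * rpow Y (1 - th) <=
  Rpower U th * Rpower V (1 - th) * (th * X / U + (1 - th) * Y / V).
Proof.
  intros Hth HX HY HU HV.
  assert (HK : 0 <= Rpower U th * Rpower V (1 - th)).
  { unfold Rpower. pose proof (exp_pos (th * ln U)); pose proof (exp_pos ((1-th) * ln V)); nra. }
  assert (HM : 0 <= th * X / U + (1 - th) * Y / V).
  { apply Rplus_le_le_0_compat; apply Rmult_le_pos; try (left; apply Rinv_0_lt_compat; lra); nra. }
  destruct HX as [HX|HX]; [destruct HY as [HY|HY]|].
  2: { subst. rewrite (rpow_0l (1-th)) by lra. rewrite Rmult_0_r. nra. }
  2: { subst. rewrite (rpow_0l th) by lra. rewrite Rmult_0_l. nra. }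
  set (M := th * X / U + (1 - th) * Y / V) in *.
  assert (HMp : 0 < M).
  { unfold M. apply Rplus_lt_0_compat; apply Rdiv_lt_0_compat; nra. }
  rewrite !rpow_pos by auto. unfold Rpower.
  replace M with (exp (ln M)) by (apply exp_ln; auto). rewrite <- !exp_plus. apply exp_le_mono.
  assert (h1 := ln_le_m1 (X / (U * M)) ltac:(apply Rdiv_lt_0_compat; nra)).
  assert (h2 := ln_le_m1 (Y / (V * M)) ltac:(apply Rdiv_lt_0_compat; nra)).
  rewrite ln_div, ln_mult in h1 by nra. rewrite ln_div, ln_mult in h2 by nra.
  assert (E : th * (X / (U * M)) + (1 - th) * (Y / (V * M)) = 1).
  { transitivity ((th * X / U + (1 - th) * Y / V) / M). field; lra.
    fold M. field; lra. }
  nra.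
Qed.

Lemma int_lemma a b A B : 0 < a < b ->
  is_RInt (fun x => B + (ln b - ln x) / (ln b - ln a) * (A - B)) a b
    (A * (logmean a b - a) + B * (b - logmean a b)).
Proof.
  intros Hab.
  assert (HD : 0 < ln b - ln a) by (pose proof (ln_increasing a b ltac:(lra) ltac:(lra)); lra).
  set (D := ln b - ln a) in *.
  assert (H := is_RInt_derive
    (fun x => B * x + (A - B) / D * (x * ln b - x * ln x + x))
    (fun x => B + (ln b - ln x) / D * (A - B)) a b).
  replace (A * (logmean a b - a) + B * (b - logmean a b)) with
    (minus (B * b + (A - B) / D * (b * ln b - b * ln b + b))
           (B * a + (A - B) / D * (a * ln b - a * ln a + a))).
  apply H.
  - intros x Hx. rewrite Rmin_left, Rmax_right in Hx by lra. auto_derive. lra. field. lra.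
  - intros x Hx. rewrite Rmin_left, Rmax_right in Hx by lra. apply (@ex_derive_continuous R_AbsRing R_NormedModule). auto_derive. lra.
  - unfold minus, plus, opp; simpl. unfold logmean. fold D.
    replace (ln a) with (ln b - D) by (unfold D; ring). field. lra.
Qed.

Lemma GA_pt h a b x : 0 < a < b -> a <= x <= b -> GA_convex 1 1 b h ->
  h x <= h b + (ln b - ln x) / (ln b - ln a) * (h a - h b).
Proof.
  intros Hab Hx Hc.
  assert (HD : 0 < ln b - ln a) by (pose proof (ln_increasing a b ltac:(lra) ltac:(lra)); lra).
  assert (H1 : ln a <= ln x) by (apply ln_le; lra).
  assert (H2 : ln x <= ln b) by (apply ln_le; lra).
  set (t := (ln b - ln x) / (ln b - ln a)).
  assert (Ht0 : 0 <= t) by (unfold t; apply Rdiv_le_0_compat; lra).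
  assert (Ht1 : t <= 1).
  { unfold t. apply (Rmult_le_reg_r (ln b - ln a)); auto. unfold Rdiv.
    rewrite Rmult_assoc, Rinv_l by lra. lra. }
  assert (H := Hc a b t ltac:(lra) ltac:(lra) ltac:(lra)).
  rewrite rpow_1 in H by auto. rewrite !rpow_pos in H by lra.
  replace (Rpower a t * Rpower b (1 * (1 - t))) with x in H.
  - replace (t * h a + 1 * (1 - t) * h b) with (h b + t * (h a - h b)) in H by ring. exact H.
  - unfold Rpower. rewrite <- exp_plus.
    replace (t * ln a + 1 * (1 - t) * ln b) with (ln x). rewrite exp_ln; lra.
    unfold t. field. lra.
Qed.

Theorem corollary3p8
  (f g : R -> R) (a b q : R)
  (hf : forall x, 0 <= x -> 0 <= f x)
  (hg : forall x, 0 <= x -> 0 <= g x)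
  (hab : 0 < a < b)
  (pr : Riemann_integrable (fun x => f x * g x) a b)
  (hq : 1 < q)
  (hfc : GA_convex 1 1 b (fun x => rpow (f x) q))
  (hgc : GA_convex 1 1 b (fun x => rpow (g x) (q / (q - 1)))) :
  RiemannInt pr <=
    rpow (rpow (f a) q * (logmean a b - a) + (b - logmean a b) * rpow (f b) q) (1 / q) *
    rpow (rpow (g a) (q / (q - 1)) * (logmean a b - a)
          + (b - logmean a b) * rpow (g b) (q / (q - 1))) (1 - 1 / q).
Proof.
  assert (HD : 0 < ln b - ln a) by (pose proof (ln_increasing a b ltac:(lra) ltac:(lra)); lra).
  assert (HLa : a < logmean a b).
  { unfold logmean. pose proof (exp_ineq1 (ln (b / a)) ltac:(rewrite ln_div by lra; lra)).
    rewrite exp_ln in H by (apply Rdiv_lt_0_compat; lra). rewrite ln_div in H by lra.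
    apply (Rmult_lt_reg_r (ln b - ln a)); auto. unfold Rdiv.
    rewrite Rmult_assoc, Rinv_l by lra.
    apply (Rmult_lt_compat_l a) in H; [|lra]. replace (a * (b / a)) with b in H by (field; lra). lra. }
  assert (HLb : logmean a b < b).
  { unfold logmean. pose proof (exp_ineq1 (ln (a / b)) ltac:(rewrite ln_div by lra; lra)).
    rewrite exp_ln in H by (apply Rdiv_lt_0_compat; lra). rewrite ln_div in H by lra.
    apply (Rmult_lt_reg_r (ln b - ln a)); auto. unfold Rdiv.
    rewrite Rmult_assoc, Rinv_l by lra.
    apply (Rmult_lt_compat_l b) in H; [|lra]. replace (b * (a / b)) with a in H by (field; lra). lra. }
  set (L := logmean a b) in *.
  set (p := q / (q - 1)) in *.
  set (Fa := rpow (f a) q). set (Fb := rpow (f b) q).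
  set (Ga := rpow (g a) p). set (Gb := rpow (g b) p).
  assert (HFa : 0 <= Fa) by apply rpow_ge0. assert (HFb : 0 <= Fb) by apply rpow_ge0.
  assert (HGa : 0 <= Ga) by apply rpow_ge0. assert (HGb : 0 <= Gb) by apply rpow_ge0.
  set (U := Fa * (L - a) + (b - L) * Fb).
  set (V := Ga * (L - a) + (b - L) * Gb).
  assert (Hfx : forall x, a <= x <= b -> rpow (f x) q <= Fb + (ln b - ln x) / (ln b - ln a) * (Fa - Fb))
    by (intros; apply (GA_pt (fun x => rpow (f x) q)); auto).
  assert (Hgx : forall x, a <= x <= b -> rpow (g x) p <= Gb + (ln b - ln x) / (ln b - ln a) * (Ga - Gb))
    by (intros; apply (GA_pt (fun x => rpow (g x) p)); auto).
  assert (Ht : forall x, a <= x <= b -> 0 <= (ln b - ln x) / (ln b - ln a) <= 1).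
  { intros x Hx. assert (H1 : ln a <= ln x) by (apply ln_le; lra).
    assert (H2 : ln x <= ln b) by (apply ln_le; lra). split.
    apply Rdiv_le_0_compat; lra.
    apply (Rmult_le_reg_r (ln b - ln a)); auto. unfold Rdiv.
    rewrite Rmult_assoc, Rinv_l by lra. lra. }
  assert (HRHS : 0 <= rpow U (1 / q) * rpow V (1 - 1 / q))
    by (apply Rmult_le_pos; apply rpow_ge0).
  rewrite <- RInt_Reals.
  assert (Hq0 : q <> 0) by lra.
  destruct (Rle_lt_dec U 0) as [HU|HU].
  {
    assert (Fa = 0 /\ Fb = 0) as [E1 E2] by (unfold U in HU; split; nra).
    apply Rle_trans with (RInt (fun _ => 0) a b).
    2: { rewrite RInt_const. unfold scal; simpl. unfold mult; simpl. lra. }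
    apply RInt_le. lra. apply ex_RInt_Reals_1; exact pr. apply ex_RInt_const.
    intros x Hx. assert (Hx' : a <= x <= b) by lra.
    assert (H := Hfx x Hx'). rewrite E1, E2 in H.
    replace (f x) with 0. lra. symmetry. apply (rpow_zero_inv _ q); auto. apply hf; lra. lra. }
  destruct (Rle_lt_dec V 0) as [HV|HV].
  { assert (Ga = 0 /\ Gb = 0) as [E1 E2] by (unfold V in HV; split; nra).
    apply Rle_trans with (RInt (fun _ => 0) a b).
    2: { rewrite RInt_const. unfold scal; simpl. unfold mult; simpl. lra. }
    apply RInt_le. lra. apply ex_RInt_Reals_1; exact pr. apply ex_RInt_const.
    intros x Hx. assert (Hx' : a <= x <= b) by lra.
    assert (H := Hgx x Hx'). rewrite E1, E2 in H.
    replace (g x) with 0. lra. symmetry. apply (rpow_zero_inv _ p); auto. apply hg; lra.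
    unfold p. apply Rgt_not_eq, Rdiv_lt_0_compat; lra. lra. }
  set (th := 1 / q) in *.
  assert (Hth : 0 < th < 1).
  { unfold th. split. apply Rdiv_lt_0_compat; lra.
    apply (Rmult_lt_reg_r q); [lra|]. unfold Rdiv. rewrite Rmult_1_l, Rinv_l by lra. lra. }
  rewrite !rpow_pos by auto.
  set (K := Rpower U th * Rpower V (1 - th)).
  assert (HK : 0 <= K).
  { unfold K, Rpower. pose proof (exp_pos (th * ln U)); pose proof (exp_pos ((1-th) * ln V)); nra. }
  set (w := fun x => K * (th / U * (Fb + (ln b - ln x) / (ln b - ln a) * (Fa - Fb))
                    + (1 - th) / V * (Gb + (ln b - ln x) / (ln b - ln a) * (Ga - Gb)))).
  assert (Hw : is_RInt w a b K).
  { set (A := K * (th * Fa / U + (1 - th) * Ga / V)).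
    set (B := K * (th * Fb / U + (1 - th) * Gb / V)).
    assert (H0 := int_lemma a b A B hab). fold L in H0.
    assert (E : A * (L - a) + B * (b - L) = K).
    { unfold A, B. transitivity (K * (th * (Fa * (L - a) + (b - L) * Fb) / U
         + (1 - th) * (Ga * (L - a) + (b - L) * Gb) / V)).
      field. split; lra. fold U V. field. split; lra. }
    rewrite E in H0. revert H0. apply is_RInt_ext.
    intros x _. unfold w, A, B. match goal with |- ?x = ?y => change (@eq R x y) end. field. split; lra. }
  rewrite <- (is_RInt_unique _ _ _ _ Hw).
  apply RInt_le. lra. apply ex_RInt_Reals_1; exact pr. exists K; exact Hw.
  intros x Hx. assert (Hx' : a <= x <= b) by lra.
  rewrite <- (rpow_inv (f x) q th) by (first [apply hf; lra | lra | unfold th; field; lra]).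
  rewrite <- (rpow_inv (g x) p (1 - th)) by (first [apply hg; lra | unfold p; apply Rgt_not_eq, Rdiv_lt_0_compat; lra | unfold p, th; field; lra]).
  eapply Rle_trans. apply amgm; [exact Hth | apply rpow_ge0 | apply rpow_ge0 | exact HU | exact HV].
  unfold w. fold K. apply Rmult_le_compat_l; auto.
  apply Rplus_le_compat.
  - replace (th * rpow (f x) q / U) with (th / U * rpow (f x) q) by (field; lra).
    apply Rmult_le_compat_l. apply Rdiv_le_0_compat; lra. apply Hfx; auto.
  - replace ((1 - th) * rpow (g x) p / V) with ((1 - th) / V * rpow (g x) p) by (field; lra).
    apply Rmult_le_compat_l. apply Rdiv_le_0_compat; lra. apply Hgx; auto.
Qed.
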